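(* The $\mathbb F$-algebra $\Delta$ has a presentation by generators $A$, $B$, $\gamma$ and relations \begin{gather*} A^3B-[3]_q A^2BA+[3]_q ABA^2-BA^3 = -(q^2-q^{-2})^2(AB-BA),\\ B^3A-[3]_q B^2AB+[3]_q BAB^2-AB^3 = -(q^2-q^{-2})^2(BA-AB),\\ A^2B^2-B^2A^2+(q^2+q^{-2})(BABA-ABAB) = -(q-q^{-1})^2(AB-BA)\gamma,\\ \gamma A = A\gamma,\qquad \gamma B = B\gamma. \end{gather*}
   Context: Let $\mathbb F$ be a field and fix a nonzero $q\in\mathbb F$ with $q^4\neq 1$. Algebras are associative with 1. The universal Askey--Wilson algebra $\Delta=\Delta_q$ is the $\mathbb F$-algebra with generators $A,B,C$ subject to the relations that each of $A+\frac{qBC-q^{-1}CB}{q^2-q^{-2}}$, $B+\frac{qCA-q^{-1}AC}{q^2-q^{-2}}$, $C+\frac{qAB-q^{-1}BA}{q^2-q^{-2}}$ is central in $\Delta$. Define $\alpha,\beta,\gamma$ by multiplying these three central elements (in this order) by $q+q^{-1}$; so e.g. $C+\frac{qAB-q^{-1}BA}{q^2-q^{-2}}=\frac{\gamma}{q+q^{-1}}$. Here $[n]_q=\frac{q^n-q^{-n}}{q-q^{-1}}$. *)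

(* Defs.v *)
From HB Require Import structures.
From mathcomp Require Import all_boot all_order all_algebra.
Set Implicit Arguments. Unset Strict Implicit. Unset Printing Implicit Defensive.
Import GRing.Theory.
Local Open Scope ring_scope.

Definition qint (F : fieldType) (q : F) (n : nat) : F :=
  (q ^+ n - q ^- n) / (q - q^-1).

Definition commutes3 (F : fieldType) (R : algType F) (z x y w : R) : Prop :=
  z * x = x * z /\ z * y = y * z /\ z * w = w * z.

Definition centA (F : fieldType) (q : F) (R : algType F) (A B C : R) : R :=
  A + (q ^+ 2 - q ^- 2)^-1 *: (q *: (B * C) - q^-1 *: (C * B)).
Definition centB (F : fieldType) (q : F) (R : algType F) (A B C : R) : R :=
  B + (q ^+ 2 - q ^- 2)^-1 *: (q *: (C * A) - q^-1 *: (A * C)).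
Definition centC (F : fieldType) (q : F) (R : algType F) (A B C : R) : R :=
  C + (q ^+ 2 - q ^- 2)^-1 *: (q *: (A * B) - q^-1 *: (B * A)).

(* Defining relations of the universal Askey-Wilson algebra, for a triple
   (A, B, C) of elements of an F-algebra R: each of the three elements
   commutes with all generators A, B, C (i.e. is central in the algebra they
   generate subject to these relations). *)
Definition DeltaRel (F : fieldType) (q : F) (R : algType F) (A B C : R) : Prop :=
  commutes3 (centA q A B C) A B C /\
  commutes3 (centB q A B C) A B C /\
  commutes3 (centC q A B C) A B C.

Definition gammaE (F : fieldType) (q : F) (R : algType F) (A B C : R) : R :=
  (q + q^-1) *: centC q A B C.

Definition Cof (F : fieldType) (q : F) (R : algType F) (A B g : R) : R :=
  (q + q^-1)^-1 *: g - (q ^+ 2 - q ^- 2)^-1 *: (q *: (A * B) - q^-1 *: (B * A)).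

Definition NewRel (F : fieldType) (q : F) (R : algType F) (A B g : R) : Prop :=
  [/\ A ^+ 3 * B - qint q 3 *: (A ^+ 2 * B * A) + qint q 3 *: (A * B * A ^+ 2)
        - B * A ^+ 3 = - ((q ^+ 2 - q ^- 2) ^+ 2) *: (A * B - B * A),
      B ^+ 3 * A - qint q 3 *: (B ^+ 2 * A * B) + qint q 3 *: (B * A * B ^+ 2)
        - A * B ^+ 3 = - ((q ^+ 2 - q ^- 2) ^+ 2) *: (B * A - A * B),
      A ^+ 2 * B ^+ 2 - B ^+ 2 * A ^+ 2 + (q ^+ 2 + q ^- 2) *: (B * A * B * A - A * B * A * B)
        = - ((q - q^-1) ^+ 2) *: ((A * B - B * A) * g),
      g * A = A * g &
      g * B = B * g].

(* Main.v *)
Require Import Defs.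
From HB Require Import structures.
From mathcomp Require Import all_boot all_order all_algebra.
From mathcomp Require Import ring.
Import GRing.Theory.
Local Open Scope ring_scope.
Set Implicit Arguments.

Inductive tm (F : Type) : Type :=
 | TAt of nat | TZ | TO | TAdd of tm F & tm F | TOpp of tm F
 | TMul of tm F & tm F | TSc of F & tm F | TExp of tm F & nat.
Arguments TAt {F}. Arguments TZ {F}. Arguments TO {F}.
Arguments TAdd {F}. Arguments TOpp {F}. Arguments TMul {F}.
Arguments TSc {F}. Arguments TExp {F}.

Fixpoint evt {F : fieldType} {R : algType F} (env : seq R) (t : tm F) : R :=
  match t with
  | TAt n => nth 0 env n
  | TZ => 0
  | TO => 1
  | TAdd a b => evt env a + evt env b
  | TOpp a => - evt env a
  | TMul a b => evt env a * evt env b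
  | TSc k a => k *: evt env a
  | TExp a n => evt env a ^+ n
  end.

Definition nfm {F : fieldType} (l1 l2 : seq (F * seq nat)) : seq (F * seq nat) :=
  foldr (fun p acc => map (fun r => (p.1 * r.1, p.2 ++ r.2)) l2 ++ acc) [::] l1.

Fixpoint norm {F : fieldType} (t : tm F) : seq (F * seq nat) :=
  match t with
  | TAt n => [:: (1, [:: n])]
  | TZ => [::]
  | TO => [:: (1, [::])]
  | TAdd a b => norm a ++ norm b
  | TOpp a => map (fun p => (- p.1, p.2)) (norm a)
  | TMul a b => nfm (norm a) (norm b)
  | TSc k a => map (fun p => (k * p.1, p.2)) (norm a)
  | TExp a n => iter n (nfm (norm a)) [:: (1, [::])]
  end.

Definition evw {F : fieldType} {R : algType F} (env : seq R) (w : seq nat) : R :=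
  foldr (fun i acc => nth 0 env i * acc) 1 w.
Definition evn {F : fieldType} {R : algType F} (env : seq R) (l : seq (F * seq nat)) : R :=
  foldr (fun p acc => p.1 *: evw env p.2 + acc) 0 l.

Section Lemmas.
Variables (F : fieldType) (R : algType F) (env : seq R).

Lemma evw_cat w1 w2 : evw env (w1 ++ w2) = evw env w1 * evw env w2.
Proof. by elim: w1 => [|i w IH] /=; rewrite ?mul1r // IH mulrA. Qed.

Lemma evn_cat l1 l2 : evn env (l1 ++ l2) = evn env l1 + evn env l2.
Proof. by elim: l1 => [|p l IH] /=; rewrite ?add0r // IH addrA. Qed.

Lemma evn_opp l : evn env (map (fun p => (- p.1, p.2)) l) = - evn env l.
Proof. by elim: l => [|p l IH] /=; rewrite ?oppr0 // IH opprD scaleNr. Qed.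

Lemma evn_sc k l : evn env (map (fun p => (k * p.1, p.2)) l) = k *: evn env l.
Proof. by elim: l => [|p l IH] /=; rewrite ?scaler0 // IH scalerDr scalerA. Qed.

Lemma evn_nfm l1 l2 : evn env (nfm l1 l2) = evn env l1 * evn env l2.
Proof.
elim: l1 => [|p l IH] /=; first by rewrite mul0r.
rewrite evn_cat IH mulrDl; congr (_ + _).
elim: l2 {IH} => [|r l2 IH] /=; first by rewrite mulr0.
rewrite IH mulrDr evw_cat -scalerA scalerAl scalerAr; congr (_ + _).
by rewrite -!scalerAl -!scalerAr !scalerA mulrC.
Qed.

Lemma norm_ok t : evt env t = evn env (norm t).
Proof.
elim: t => [n||| a IHa b IHb | a IHa | a IHa b IHb | k a IHa | a IHa n] /=.
- by rewrite scale1r addr0 mulr1.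
- by [].
- by rewrite scale1r addr0.
- by rewrite evn_cat IHa IHb.
- by rewrite evn_opp IHa.
- by rewrite evn_nfm IHa IHb.
- by rewrite evn_sc IHa.
- elim: n => [|n IH] /=; first by rewrite expr0 scale1r addr0.
  by rewrite evn_nfm -IH IHa exprS.
Qed.

Definition cw (c : nat) (w : seq nat) := filter (fun i => ~~ eqn i c) w ++ filter (fun i => eqn i c) w.

Lemma comm_evw c w : (forall i, GRing.comm (nth 0 env c) (nth 0 env i)) ->
  GRing.comm (nth 0 env c) (evw env w).
Proof.
move=> H; elim: w => [|i w IH] /=; first exact: commr1.
exact: commrM.
Qed.

Lemma evw_cw c w : (forall i, GRing.comm (nth 0 env c) (nth 0 env i)) ->
  evw env (cw c w) = evw env w.
Proof.
move=> H; rewrite /cw evw_cat.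
elim: w => [|i w IH] /=; first by rewrite mul1r.
case: (@eqnP i c) => [->|_] /=; rewrite ?eqnn /=.
  by rewrite mulrA -(comm_evw c _ H) -mulrA IH.
by rewrite -mulrA IH.
Qed.

Definition cwl c (l : seq (F * seq nat)) := map (fun p => (p.1, cw c p.2)) l.

Lemma evn_cw c l : (forall i, GRing.comm (nth 0 env c) (nth 0 env i)) ->
  evn env (cwl c l) = evn env l.
Proof. by move=> H; elim: l => [|p l IH] //=; rewrite IH evw_cw. Qed.

Fixpoint weq (a b : seq nat) : bool :=
  match a, b with
  | [::], [::] => true
  | x :: a', y :: b' => eqn x y && weq a' b'
  | _, _ => false
  end.

Lemma weqE a b : weq a b = (a == b).
Proof.
elim: a b => [|x a IH] [|y b] //=.
by rewrite IH eqseq_cons.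
Qed.

Definition coef (l : seq (F * seq nat)) (w : seq nat) : F :=
  foldr (fun p acc => if weq p.2 w then p.1 + acc else acc) 0 l.

Lemma sum_delta (x : seq nat) (a : F) ws : uniq ws -> x \in ws ->
  \sum_(w <- ws) (if x == w then a else 0) *: evw env w = a *: evw env x.
Proof.
elim: ws => [|w ws IH] //= /andP[wn u]; rewrite inE big_cons.
have [->|ne] := eqVneq x w; last by move=> /= xin; rewrite scale0r add0r IH.
move=> _; rewrite big_seq big1 ?addr0 // => w' w'in.
case: eqP => [ew|]; last by rewrite scale0r.
by move: wn; rewrite ew w'in.
Qed.

Lemma evn_coef l ws : uniq ws -> {subset map snd l <= ws} ->
  evn env l = \sum_(w <- ws) coef l w *: evw env w.
Proof.
move=> u; elim: l => [|p l IH] /= sub.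
  by rewrite big1 // => w _; rewrite scale0r.
rewrite IH; last by move=> w win; apply: sub; rewrite inE win orbT.
have -> : \sum_(w <- ws) (if weq p.2 w then p.1 + coef l w else coef l w) *: evw env w
   = \sum_(w <- ws) ((if p.2 == w then p.1 else 0) *: evw env w + coef l w *: evw env w).
  apply: eq_bigr => w _; rewrite weqE; case: eqP => _; by rewrite ?scalerDl ?scale0r ?add0r.
rewrite big_split /= sum_delta //; apply: sub; by rewrite inE eqxx.
Qed.

Fixpoint wmem (w : seq nat) (ws : seq (seq nat)) : bool :=
  if ws is w' :: ws' then weq w w' || wmem w ws' else false.
Definition wdedup (ws : seq (seq nat)) : seq (seq nat) :=
  foldr (fun w acc => if wmem w acc then acc else w :: acc) [::] ws.

Lemma wmemE w ws : wmem w ws = (w \in ws).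
Proof. by elim: ws => [|w' ws IH] //=; rewrite inE weqE IH. Qed.

Lemma wdedup_sub ws : {subset ws <= wdedup ws}.
Proof.
elim: ws => [|w ws IH] //= x; rewrite inE => /orP[/eqP->|xin].
  by case: ifP => [|_]; rewrite ?wmemE // inE eqxx.
by case: ifP => _; rewrite ?inE IH ?orbT.
Qed.

Definition allc (l1 l2 : seq (F * seq nat)) (ws : seq (seq nat)) : Prop :=
  foldr (fun w P => coef l1 w = coef l2 w /\ P) True ws.

Lemma allcP l1 l2 ws : allc l1 l2 ws -> forall w, w \in ws -> coef l1 w = coef l2 w.
Proof.
elim: ws => [|w ws IH] //= [h1 h2] x; rewrite inE => /orP[/eqP->//|]; exact: IH.
Qed.

Lemma nc_eq c t1 t2 : (forall i, GRing.comm (nth 0 env c) (nth 0 env i)) ->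
  allc (cwl c (norm t1)) (cwl c (norm t2))
       (wdedup (map snd (cwl c (norm t1) ++ cwl c (norm t2)))) ->
  evt env t1 = evt env t2.
Proof.
move=> H A.
rewrite !norm_ok -(evn_cw c (norm t1) H) -(evn_cw c (norm t2) H).
set l1 := cwl c (norm t1); set l2 := cwl c (norm t2).
pose ws := undup (map snd (l1 ++ l2)).
have u : uniq ws by apply: undup_uniq.
rewrite (@evn_coef l1 ws) ?(@evn_coef l2 ws) //; last first.
- by move=> x xin; rewrite mem_undup map_cat mem_cat xin.
- by move=> x xin; rewrite mem_undup map_cat mem_cat xin orbT.
rewrite big_seq_cond [RHS]big_seq_cond; apply: eq_bigr => w /andP[win _].
congr (_ *: _); move/allcP: A => A; apply: A; apply: wdedup_sub.
by rewrite mem_undup in win.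
Qed.

End Lemmas.

Ltac find_atom env x :=
  match env with
  | ?a :: ?rest => let _ := match goal with _ => constr_eq a x end in constr:(0%N)
  | ?a :: ?rest => let n := find_atom rest x in constr:(S n)
  end.

Ltac reify F env x :=
  lazymatch x with
  | @GRing.add _ ?a ?b => let ra := reify F env a in let rb := reify F env b in constr:(@TAdd F ra rb)
  | @GRing.opp _ ?a => let ra := reify F env a in constr:(@TOpp F ra)
  | @GRing.mul _ ?a ?b => let ra := reify F env a in let rb := reify F env b in constr:(@TMul F ra rb)
  | @GRing.scale _ _ ?k ?a => let ra := reify F env a in constr:(@TSc F k ra)
  | @GRing.exp _ ?a ?n => let ra := reify F env a in constr:(@TExp F ra n)
  | @GRing.zero _ => constr:(@TZ F)
  | @GRing.one _ => constr:(@TO F)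
  | _ => let n := find_atom env x in constr:(@TAt F n)
  end.

Ltac nc_reflect F env c :=
  lazymatch goal with
  | |- ?l = ?r =>
    let tl := reify F env l in let tr := reify F env r in
    change (evt env tl = evt env tr); apply: (@nc_eq F _ env c)
  end.

Ltac nc_close hq h4 h2 h1 :=
  lazy beta iota zeta delta [allc coef cwl cw norm nfm wdedup wmem weq map cat foldr iter fst snd eqn negb andb orb filter];
  repeat match goal with |- _ /\ _ => split end; try done;
  field; rewrite ?hq ?h4 ?h2 ?h1 //.

Ltac comm3 gA gB :=
  case=> [|[|[|i]]] /=; [exact: gA | exact: gB | exact: commr_refl | by rewrite nth_nil; exact: commr0].
Ltac comm0 := move=> i /=; by rewrite /GRing.comm mul0r mulr0.

Section Ids.
Variables (F : fieldType) (q : F) (R : algType F).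
Hypotheses (hq : q != 0) (h4 : (q * q) ^+ 2 - 1 != 0) (h2 : q * q + 1 != 0) (h1 : q * q - 1 != 0).

Lemma I_C (A B g : R) : centC q A B (Cof q A B g) = (q + q^-1)^-1 *: g.
Proof using hq h4 h2 h1. rewrite /centC /Cof; nc_reflect F [:: A; B; g] 3%N; [comm0 | nc_close hq h4 h2 h1]. Qed.

Lemma I_g (A B g : R) : gammaE q A B (Cof q A B g) = g.
Proof using hq h4 h2 h1. rewrite /gammaE /centC /Cof; nc_reflect F [:: A; B; g] 3%N; [comm0 | nc_close hq h4 h2 h1]. Qed.

Lemma I_Cof (A B C : R) : Cof q A B (gammaE q A B C) = C.
Proof using hq h4 h2 h1. rewrite /gammaE /centC /Cof; nc_reflect F [:: A; B; C] 3%N; [comm0 | nc_close hq h4 h2 h1]. Qed.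

Variables (A B g : R).
Hypotheses (gA : g * A = A * g) (gB : g * B = B * g).

Lemma I_AA : centA q A B (Cof q A B g) * A - A * centA q A B (Cof q A B g) =
  - (q ^+ 2 - q ^- 2)^-2 *: ((A ^+ 2 * B ^+ 2 - B ^+ 2 * A ^+ 2 + (q ^+ 2 + q ^- 2) *: (B * A * B * A - A * B * A * B))
        - (- ((q - q^-1) ^+ 2) *: ((A * B - B * A) * g))).
Proof using hq h4 h2 h1 gA gB. rewrite /centA /Cof; nc_reflect F [:: A; B; g] 2%N; [comm3 gA gB | nc_close hq h4 h2 h1]. Qed.

Lemma I_BB : centB q A B (Cof q A B g) * B - B * centB q A B (Cof q A B g) =
  (q ^+ 2 - q ^- 2)^-2 *: ((A ^+ 2 * B ^+ 2 - B ^+ 2 * A ^+ 2 + (q ^+ 2 + q ^- 2) *: (B * A * B * A - A * B * A * B))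
        - (- ((q - q^-1) ^+ 2) *: ((A * B - B * A) * g))).
Proof using hq h4 h2 h1 gA gB. rewrite /centB /Cof; nc_reflect F [:: A; B; g] 2%N; [comm3 gA gB | nc_close hq h4 h2 h1]. Qed.

Lemma I_BA : centB q A B (Cof q A B g) * A - A * centB q A B (Cof q A B g) =
  - (q ^+ 2 - q ^- 2)^-2 *: ((A ^+ 3 * B - qint q 3 *: (A ^+ 2 * B * A) + qint q 3 *: (A * B * A ^+ 2)
        - B * A ^+ 3) - (- ((q ^+ 2 - q ^- 2) ^+ 2) *: (A * B - B * A))).
Proof using hq h4 h2 h1 gA gB. rewrite /centB /Cof /qint; nc_reflect F [:: A; B; g] 2%N; [comm3 gA gB | nc_close hq h4 h2 h1]. Qed.

Lemma I_AB : centA q A B (Cof q A B g) * B - B * centA q A B (Cof q A B g) =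
  - (q ^+ 2 - q ^- 2)^-2 *: ((B ^+ 3 * A - qint q 3 *: (B ^+ 2 * A * B) + qint q 3 *: (B * A * B ^+ 2)
        - A * B ^+ 3) - (- ((q ^+ 2 - q ^- 2) ^+ 2) *: (B * A - A * B))).
Proof using hq h4 h2 h1 gA gB. rewrite /centA /Cof /qint; nc_reflect F [:: A; B; g] 2%N; [comm3 gA gB | nc_close hq h4 h2 h1]. Qed.

End Ids.

Lemma nzq (F : fieldType) (q : F) : q != 0 -> q ^+ 4 != 1 ->
  [/\ (q * q) ^+ 2 - 1 != 0, q * q + 1 != 0, q * q - 1 != 0,
      q + q^-1 != 0 & q ^+ 2 - q ^- 2 != 0].
Proof.
move=> hq hq4.
have h4 : (q * q) ^+ 2 - 1 != 0.
  have -> : (q * q) ^+ 2 = q ^+ 4 by ring.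
  by rewrite subr_eq0.
have fact : (q * q) ^+ 2 - 1 = (q * q - 1) * (q * q + 1) by ring.
move: (h4); rewrite fact mulf_eq0 negb_or => /andP[h1 h2].
split => //; first by rewrite h1 h2.
  have -> : q + q^-1 = (q * q + 1) / q by field.
  by rewrite mulf_neq0 // invr_neq0.
have -> : q ^+ 2 - q ^- 2 = ((q * q) ^+ 2 - 1) / (q * q) by field.
by rewrite mulf_neq0 // invr_neq0 // mulf_neq0.
Qed.

Lemma keyeq (F : fieldType) (R : algType F) (k : F) (z x L Rr : R) : k != 0 ->
  z * x - x * z = k *: (L - Rr) -> (z * x = x * z <-> L = Rr).
Proof.
move=> hk e; split => h.
  move: e; rewrite h subrr => /esym/eqP; rewrite scaler_eq0 (negbTE hk) /= subr_eq0.
  by move/eqP.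
by move: e; rewrite h subrr scaler0 => /eqP; rewrite subr_eq0 => /eqP.
Qed.

Lemma commZ (F : fieldType) (R : algType F) (x y : R) (k : F) :
  GRing.comm x y -> GRing.comm x (k *: y).
Proof. by rewrite /GRing.comm -scalerAl -scalerAr => ->. Qed.

Ltac commt := repeat first [assumption | apply: commrD | apply: commrN
                          | apply: commZ | apply: commrM].

Lemma comm_Cof (F : fieldType) (q : F) (R : algType F) (z A B g : R) :
  GRing.comm z A -> GRing.comm z B -> GRing.comm z g -> GRing.comm z (Cof q A B g).
Proof. by move=> *; rewrite /Cof; commt. Qed.

Lemma comm_centA (F : fieldType) (q : F) (R : algType F) (z A B C : R) :
  GRing.comm z A -> GRing.comm z B -> GRing.comm z C -> GRing.comm z (centA q A B C).
Proof. by move=> *; rewrite /centA; commt. Qed.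

Lemma comm_centB (F : fieldType) (q : F) (R : algType F) (z A B C : R) :
  GRing.comm z A -> GRing.comm z B -> GRing.comm z C -> GRing.comm z (centB q A B C).
Proof. by move=> *; rewrite /centB; commt. Qed.

Theorem theorem2p2 (F : fieldType) (q : F) (hq0 : q != 0) (hq4 : q ^+ 4 != 1)
    (R : algType F) :
  (forall A B C : R, DeltaRel q A B C ->
     NewRel q A B (gammaE q A B C) /\ Cof q A B (gammaE q A B C) = C) /\
  (forall A B g : R, NewRel q A B g ->
     DeltaRel q A B (Cof q A B g) /\ gammaE q A B (Cof q A B g) = g).
Proof.
have [h4 h2 h1 ht hs] := @nzq _ _ hq0 hq4.
have hk : (q ^+ 2 - q ^- 2)^-2 != 0 by rewrite invr_eq0 expf_eq0 negb_and hs orbT.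
have hk' : - (q ^+ 2 - q ^- 2)^-2 != 0 by rewrite oppr_eq0.
split.
- move=> A B C H.
  have hC := @I_Cof _ _ _ hq0 h4 h2 h1 A B C.
  split; last exact: hC.
  rewrite -hC in H.
  move: H; move: (gammaE q A B C) => g H.
  case: H => [[aA [aB aC]] [[bA [bB bC]] [cA [cB cC]]]].
  rewrite (@I_C _ _ _ hq0 h4 h2 h1) in cA cB.
  have gA : g * A = A * g.
    have := congr1 (fun x => (q + q^-1) *: x) cA.
    by rewrite -scalerAl -scalerAr !scalerA mulfV // !scale1r.
  have gB : g * B = B * g.
    have := congr1 (fun x => (q + q^-1) *: x) cB.
    by rewrite -scalerAl -scalerAr !scalerA mulfV // !scale1r.
  split => //.
  + exact: (@keyeq _ _ _ _ _ _ _ hk' (@I_BA _ _ _ hq0 h4 h2 h1 _ _ _ gA gB)).1 bA.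
  + exact: (@keyeq _ _ _ _ _ _ _ hk' (@I_AB _ _ _ hq0 h4 h2 h1 _ _ _ gA gB)).1 aB.
  + exact: (@keyeq _ _ _ _ _ _ _ hk' (@I_AA _ _ _ hq0 h4 h2 h1 _ _ _ gA gB)).1 aA.
- move=> A B g [r1 r2 r3 gA gB].
  split; last exact: (@I_g _ _ _ hq0 h4 h2 h1).
  have aA := (@keyeq _ _ _ _ _ _ _ hk' (@I_AA _ _ _ hq0 h4 h2 h1 _ _ _ gA gB)).2 r3.
  have aB := (@keyeq _ _ _ _ _ _ _ hk' (@I_AB _ _ _ hq0 h4 h2 h1 _ _ _ gA gB)).2 r2.
  have bA := (@keyeq _ _ _ _ _ _ _ hk' (@I_BA _ _ _ hq0 h4 h2 h1 _ _ _ gA gB)).2 r1.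
  have bB := (@keyeq _ _ _ _ _ _ _ hk (@I_BB _ _ _ hq0 h4 h2 h1 _ _ _ gA gB)).2 r3.
  have gg : GRing.comm g g := commr_refl g.
  have gC : GRing.comm g (Cof q A B g) := comm_Cof q gA gB gg.
  have aC : GRing.comm (centA q A B (Cof q A B g)) (Cof q A B g).
    apply: comm_Cof => //; apply: commr_sym; exact: comm_centA.
  have bC : GRing.comm (centB q A B (Cof q A B g)) (Cof q A B g).
    apply: comm_Cof => //; apply: commr_sym; exact: comm_centB.
  split; first by split.
  split; first by split.
  rewrite /commutes3 (@I_C _ _ _ hq0 h4 h2 h1).
  by split; [|split]; apply: commr_sym; apply: commZ; apply: commr_sym.
Qed.
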